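(* Let $k_0<q$ be positive integers and $\mathbb{F}$ a finite field. Let $\mathcal{S}\subseteq\binom{[q]}{k_0-1}$ be a family of $(k_0-1)$-element subsets of $[q]$ such that any two distinct $S_1,S_2\in\mathcal{S}$ satisfy $|S_1\cap S_2|\le1$. Then there is a black-box transformation with parameters $(k_0-1,\,q+|\mathcal{S}|,\,k_0,\,|\mathcal{S}|,\,\mathbb{F})$ and rate $1-q/(q+|\mathcal{S}|)$, in which $c_j\le|\mathcal{S}|$ for every $j\in[q+|\mathcal{S}|]$.
   Context: A $k$-party $\ell$-LMSSS over $\mathbb{F}$: an $\mathbb{F}$-linear map $\mathsf{Share}:\mathbb{F}^\ell\times\mathbb{F}^e\to\mathbb{F}^{b_1}\times\dots\times\mathbb{F}^{b_k}$ together with an access structure (sets that can linearly recover the secret) and adversary structure (sets whose shares, under uniform randomness, are distributed independently of the secret); information rate $\ell/\sum_jb_j$. Black-box transformation with parameters $(t,k,k_0,\ell,\mathbb{F})$: a $k$-party $\ell$-LMSSS $\mathcal{L}=(\mathsf{Share}_\mathcal{L},\mathsf{Rec}_\mathcal{L})$ over $\mathbb{F}$ with parameters $(e,b_1,\dots,b_k)$ (all $k$ parties together qualified), replication functions $\psi_i:[k_0]\to2^{[k]}$ ($i\in[\ell]$) and conversion functions $\varphi_j:\mathbb{F}^{c_j}\to\mathbb{F}^{b_j}$, $c_j=\sum_{i=1}^\ell|\{v\in[k_0]:j\in\psi_i(v)\}|$, such that for every $(y_i^{(v)})_{i\in[\ell],v\in[k_0]}$ there is $\mathbf{r}$ with $(\varphi_j(\mathbf{Y}(j)))_{j}=\mathsf{Share}_\mathcal{L}((\sum_vy_1^{(v)},\dots,\sum_vy_\ell^{(v)}),\mathbf{r})$,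 where $\mathbf{Y}(j)=(y_i^{(v)})_{i,v:\,j\in\psi_i(v)}$; and for every $T\subseteq[k]$ with $|T|\le t$ and every $i$, $|\bigcup_{j\in T}\{v:j\in\psi_i(v)\}|\le k_0-1$. Its rate is the information rate of $\mathcal{L}$. *)

(* Defs.v *)
From HB Require Import structures.
From mathcomp Require Import all_boot all_order all_algebra.
Set Implicit Arguments. Unset Strict Implicit. Unset Printing Implicit Defensive.
Import GRing.Theory Num.Theory.
Local Open Scope ring_scope.

(* A k-party l-LMSSS over F: an F-linear map
   Share : F^l x F^e -> F^(b_1) x ... x F^(b_k). *)
Record LMSSS (F : fieldType) (k l : nat) := MkLMSSS {
  lm_e : nat;
  lm_b : 'I_k -> nat;
  lm_A : forall j : 'I_k, 'M[F]_(l, lm_b j);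
  lm_B : forall j : 'I_k, 'M[F]_(lm_e, lm_b j)
}.

Definition share {F : fieldType} {k l} (L : LMSSS F k l) (j : 'I_k)
  (s : 'rV[F]_l) (r : 'rV[F]_(lm_e L)) : 'rV[F]_(lm_b L j) :=
  s *m lm_A L j + r *m lm_B L j.
Arguments share {F k l} L j s r.

Definition qualified (F : fieldType) k l (L : LMSSS F k l) (T : {set 'I_k}) :=
  exists R : forall j : 'I_k, 'M[F]_(lm_b L j, l),
    forall s r, \sum_(j in T) share L j s r *m R j = s.

Definition info_rate {F : fieldType} {k l} (L : LMSSS F k l) : rat :=
  (l%:R / (\sum_(j < k) lm_b L j)%:R)%R.

Definition Yidx k k0 l (psi : 'I_l -> 'I_k0 -> {set 'I_k}) (j : 'I_k)
  : {set 'I_l * 'I_k0} := [set iv | j \in psi iv.1 iv.2].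

Definition cdim k k0 l (psi : 'I_l -> 'I_k0 -> {set 'I_k}) (j : 'I_k) : nat :=
  #|Yidx psi j|.

Definition Yvec {F : fieldType} k k0 l (psi : 'I_l -> 'I_k0 -> {set 'I_k})
  (y : 'I_l -> 'I_k0 -> F) (j : 'I_k) : 'rV[F]_(cdim psi j) :=
  \row_(m < #|Yidx psi j|) (let iv := enum_val m in y iv.1 iv.2).
Arguments Yvec {F k k0 l} psi y j.

Unset Implicit Arguments.
Record BBT (F : fieldType) (t k k0 l : nat) := MkBBT {
  bb_L : LMSSS F k l;
  bb_psi : 'I_l -> 'I_k0 -> {set 'I_k};
  bb_phi : forall j : 'I_k, 'rV[F]_(cdim bb_psi j) -> 'rV[F]_(lm_b bb_L j);
  bb_full : qualified bb_L [set: 'I_k];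
  bb_correct : forall y : 'I_l -> 'I_k0 -> F,
    exists r : 'rV[F]_(lm_e bb_L), forall j : 'I_k,
      bb_phi j (Yvec bb_psi y j) = share bb_L j (\row_i \sum_(v < k0) y i v) r;
  bb_private : forall (T : {set 'I_k}), (#|T| <= t)%N ->
    forall i : 'I_l, (#|\bigcup_(j in T) [set v | j \in bb_psi i v]| <= k0.-1)%N
}.

Set Implicit Arguments.
Arguments bb_L {F t k k0 l}.
Arguments bb_psi {F t k k0 l}.
Definition bbt_rate F t k k0 l (B : BBT F t k k0 l) : rat := info_rate (bb_L B).
Definition bbt_c F t k k0 l (B : BBT F t k k0 l) (j : 'I_k) : nat := cdim (bb_psi B) j.

(* Main.v *)
Require Import Defs.
From mathcomp Require Import all_boot all_order all_algebra.
From mathcomp Require Import zify ring.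
Import GRing.Theory Num.Theory.

Local Open Scope ring_scope.

Definition Aset {q} (S : {set {set 'I_q}}) (i : 'I_#|S|) : {set 'I_q} := enum_val i.

Definition own {q} (S : {set {set 'I_q}}) (d : 'I_q) (i : 'I_#|S|) (v : nat) : 'I_q :=
  nth d (enum (Aset S i)) v.

Definition membP {k0 q} (S : {set {set 'I_q}}) (d : 'I_q) (i : 'I_#|S|) (v : 'I_k0)
  (j : 'I_(q + #|S|)) : bool :=
  match split j with
  | inl p => (v < k0.-1)%N && (p == own S d i v)
  | inr j' => if (v < k0.-1)%N then (j' != i) && (own S d i v \in Aset S j') else j' == i
  end.

Definition psiD {k0 q} (S : {set {set 'I_q}}) (d : 'I_q) (i : 'I_#|S|) (v : 'I_k0)
  : {set 'I_(q + #|S|)} := [set j | membP S d i v j].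

Lemma own_in k0 q (S : {set {set 'I_q}}) (d : 'I_q)
  (HS : forall A, A \in S -> #|A| = k0.-1) (i : 'I_#|S|) (v : nat) :
  (v < k0.-1)%N -> own S d i v \in Aset S i.
Proof.
move=> hv; rewrite -mem_enum /own mem_nth //.
by rewrite -cardE HS // /Aset enum_valP.
Qed.

Lemma membP_uniq k0 q (S : {set {set 'I_q}}) (d : 'I_q)
  (HS : forall A, A \in S -> #|A| = k0.-1)
  (Hint : forall S1 S2, S1 \in S -> S2 \in S -> S1 != S2 -> (#|S1 :&: S2| <= 1)%N)
  (i : 'I_#|S|) (v v' : 'I_k0) j :
  membP S d i v j -> membP S d i v' j -> v = v'.
Proof.
have Hsz : forall i : 'I_#|S|, size (enum (Aset S i)) = k0.-1.
  by move=> i0; rewrite -cardE HS // /Aset enum_valP.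
have Hin : forall i (v : nat), (v < k0.-1)%N -> own S d i v \in Aset S i.
  by move=> i0 v0 hv; rewrite -mem_enum /own mem_nth // Hsz.
have Hinj : forall i (v v' : nat), (v < k0.-1)%N -> (v' < k0.-1)%N ->
    own S d i v = own S d i v' -> v = v'.
  move=> i0 v0 v1 h0 h1 /eqP; rewrite /own nth_uniq ?Hsz ?enum_uniq //.
  by move/eqP.
rewrite /membP; case: (split j) => [p|j'].
  case/andP=> hv /eqP -> /andP [hv' /eqP E]; apply/val_inj/(Hinj i) => //.
case: ifP => hv; case: ifP => hv'.
- case/andP=> ne1 in1 /andP [_ in2]; apply/val_inj; apply: (Hinj i) => //.
  apply/eqP; apply: contraTT (Hint (Aset S i) (Aset S j') (enum_valP i) (enum_valP j')
    _) => [hne|].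
    rewrite -ltnNge.
    have -> : 2%N = #|[set own S d i v; own S d i v']| by rewrite cards2 hne.
    apply: subset_leq_card; apply/subsetP => x; rewrite !inE.
    by case/orP => /eqP ->; rewrite ?Hin ?in1 ?in2.
  apply: contra ne1 => /eqP E; apply/eqP/enum_val_inj; by rewrite /Aset in E *.
- by case/andP=> /negP ne _ /eqP E; case: ne; rewrite E.
- by move=> /eqP E; case/andP=> /negP ne _; case: ne; rewrite E.
- move=> _ _; apply/val_inj.
  move: hv hv' (ltn_ord v) (ltn_ord v') => /negbT hv /negbT hv' a b. by have : nat_of_ord v = nat_of_ord v' by lia.
Qed.
Arguments membP_uniq {k0 q S d} HS Hint {i v v' j}.
Arguments own_in {k0 q S d} HS {i v}.

Lemma sum_delta (F : fieldType) (I : finType) (f : I -> F) (a : I) :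
  \sum_x f x * (x == a)%:R = f a.
Proof.
rewrite (bigD1 a) //= eqxx mulr1 big1 ?addr0 // => x /negbTE ->.
by rewrite mulr0.
Qed.
Arguments sum_delta {F I} f a.


Definition coefD {F : fieldType} {k0 q} (S : {set {set 'I_q}})
  (j : 'I_(q + #|S|)) (iv : 'I_#|S| * 'I_k0) : F :=
  match split j with inl _ => 1 | inr _ => if (iv.2 < k0.-1)%N then -1 else 1 end.

Definition phiD {F : fieldType} {k0 q} (S : {set {set 'I_q}}) (d : 'I_q)
  (j : 'I_(q + #|S|)) (Y : 'rV[F]_(cdim (@psiD k0 q S d) j)) : 'rV[F]_1 :=
  \row_(_ < 1) \sum_(m < #|Yidx (@psiD k0 q S d) j|) coefD S j (enum_val m) * Y 0 m.

Lemma phiD_eq (F : fieldType) {k0 q} (S : {set {set 'I_q}}) (d : 'I_q)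
  (y : 'I_#|S| -> 'I_k0 -> F) j :
  phiD S d j (Yvec (@psiD k0 q S d) y j) 0 0 =
  \sum_i \sum_v (j \in psiD S d i v)%:R * coefD S j (i, v) * y i v.
Proof.
rewrite mxE.
under eq_bigr => m _ do rewrite mxE.
rewrite -(big_enum_val (fun x => coefD S j x * y x.1 x.2)) /= big_mkcond /=.
rewrite pair_big /=; apply: eq_bigr => [[i v]] _ /=.
rewrite /Yidx inE /=; case: (j \in _); by rewrite ?mul1r ?mul0r.
Qed.

Definition Amat {F : fieldType} {q} (S : {set {set 'I_q}}) (j : 'I_(q + #|S|))
  : 'M[F]_(#|S|, 1) :=
  match split j with inl _ => 0 | inr i => \matrix_(i', _) (i' == i)%:R end.

Definition Bmat {F : fieldType} {q} (S : {set {set 'I_q}}) (j : 'I_(q + #|S|))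
  : 'M[F]_(q, 1) :=
  match split j with
  | inl p => \matrix_(x, _) (x == p)%:R
  | inr i => \matrix_(x, _) - (x \in Aset S i)%:R end.

Definition Rmat {F : fieldType} {q} (S : {set {set 'I_q}}) (j : 'I_(q + #|S|))
  : 'M[F]_(1, #|S|) :=
  match split j with
  | inl p => \matrix_(_, i') (p \in Aset S i')%:R
  | inr i => \matrix_(_, i') (i' == i)%:R end.

Definition LD (F : fieldType) {q} (S : {set {set 'I_q}}) : LMSSS F (q + #|S|) #|S| :=
  @MkLMSSS F (q + #|S|) #|S| q (fun _ => 1%N) (@Amat F q S) (@Bmat F q S).

Lemma LD_A (F : fieldType) {q} (S : {set {set 'I_q}}) j :
  lm_A (LD F S) j = Amat S j.
Proof. by []. Qed.
Lemma LD_B (F : fieldType) {q} (S : {set {set 'I_q}}) j :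
  lm_B (LD F S) j = Bmat S j.
Proof. by []. Qed.

Lemma split_l {m n} (p : 'I_m) : split (lshift n p) = inl p.
Proof. exact: (unsplitK (inl p)). Qed.
Lemma split_r {m n} (p : 'I_n) : split (rshift m p) = inr p.
Proof. exact: (unsplitK (inr p)). Qed.

Lemma share_l (F : fieldType) {q} (S : {set {set 'I_q}}) p s r :
  share (LD F S) (lshift #|S| p) s r 0 0 = r 0 p.
Proof.
rewrite /share /= /Amat /Bmat split_l mulmx0 add0r mxE.
under eq_bigr => x _ do rewrite mxE.
exact: sum_delta.
Qed.

Lemma share_r (F : fieldType) {q} (S : {set {set 'I_q}}) i s r :
  share (LD F S) (rshift q i) s r 0 0 = s 0 i - \sum_x r 0 x * (x \in Aset S i)%:R.
Proof.
rewrite /share !mxE LD_A LD_B /Amat /Bmat split_r.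
under eq_bigr => x _ do rewrite mxE.
under [X in _ + X]eq_bigr => x _ do rewrite mxE mulrN.
by rewrite sum_delta sumrN.
Qed.

Lemma LD_full (F : fieldType) {q} (S : {set {set 'I_q}}) :
  qualified (LD F S) [set: 'I_(q + #|S|)].
Proof.
exists (@Rmat F q S) => s r; apply/rowP => i'.
rewrite summxE big_mkcond /= big_split_ord /=.
under eq_bigr => p _ do rewrite in_setT mxE big_ord1 share_l /Rmat split_l mxE.
under [X in _ + X]eq_bigr => i _ do
  rewrite in_setT mxE big_ord1 share_r /Rmat split_r mxE.
rewrite (eq_bigr (fun i => (s 0 i - \sum_x r 0 x * (x \in Aset S i)%:R) *
   (i == i')%:R)); last by move=> i _; rewrite eq_sym.
by rewrite sum_delta addrC subrK.
Qed.

Lemma card_psi_le1 k0 q (S : {set {set 'I_q}}) (d : 'I_q)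
  (HS : forall A, A \in S -> #|A| = k0.-1)
  (Hint : forall S1 S2, S1 \in S -> S2 \in S -> S1 != S2 -> (#|S1 :&: S2| <= 1)%N)
  (i : 'I_#|S|) j : (#|[set v : 'I_k0 | j \in psiD S d i v]| <= 1)%N.
Proof.
apply/card_le1_eqP => v v'; rewrite !inE => h1 h2.
exact: (membP_uniq HS Hint h2 h1).
Qed.

Lemma card_bigcup_le (T I : finType) (P : {pred I}) (X : I -> {set T}) :
  (#|\bigcup_(j in P) X j| <= \sum_(j in P) #|X j|)%N.
Proof.
apply: (@big_ind2 _ _ (fun (A : {set T}) (n : nat) => (#|A| <= n)%N)) => //.
- by rewrite cards0.
- move=> A1 n1 A2 n2 h1 h2; apply: leq_trans (leq_card_setU A1 A2) _.
  exact: leq_add.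
Qed.

Lemma Yidx_le k0 q (S : {set {set 'I_q}}) (d : 'I_q)
  (HS : forall A, A \in S -> #|A| = k0.-1)
  (Hint : forall S1 S2, S1 \in S -> S2 \in S -> S1 != S2 -> (#|S1 :&: S2| <= 1)%N)
  j : (cdim (@psiD k0 q S d) j <= #|S|)%N.
Proof.
rewrite /cdim -(card_in_imset (f := fst)).
  by apply: leq_trans (max_card _) _; rewrite card_ord.
move=> [i v] [i' v']; rewrite !inE /= => h1 h2 E; subst i'.
by rewrite (membP_uniq HS Hint h1 h2).
Qed.

Lemma inner_sum (F : fieldType) k0 q (S : {set {set 'I_q}}) (d : 'I_q)
  (i i' : 'I_#|S|) (v : 'I_k0) (Y : F) :
  \sum_x (lshift #|S| x \in psiD S d i' v)%:R * Y * (x \in Aset S i)%:R =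
  ((v < k0.-1)%N && (own S d i' v \in Aset S i))%:R * Y.
Proof.
under eq_bigr => x _ do rewrite inE /membP split_l.
case: (v < k0.-1)%N => /=; last first.
  by rewrite big1 ?mul0r // => x _; rewrite !mul0r.
rewrite (eq_bigr (fun x => (Y * (x \in Aset S i)%:R) * (x == own S d i' v)%:R)).
  by rewrite sum_delta mulrC.
by move=> x _; ring.
Qed.

Lemma LD_correct (F : fieldType) k0 q (S : {set {set 'I_q}}) (d : 'I_q)
  (HS : forall A, A \in S -> #|A| = k0.-1)
  (y : 'I_#|S| -> 'I_k0 -> F) :
  exists r : 'rV[F]_(lm_e (LD F S)), forall j : 'I_(q + #|S|),
    phiD S d j (Yvec (psiD S d) y j) = share (LD F S) j (\row_i \sum_(v < k0) y i v) r.
Proof.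
exists (\row_(p < q) \sum_i \sum_v (lshift #|S| p \in psiD S d i v)%:R * y i v).
move=> j; apply/rowP => z; rewrite ord1 phiD_eq.
rewrite -[j]splitK; case: (split j) => [p|i].
  change (unsplit (inl p)) with (lshift #|S| p).
  rewrite share_l mxE; apply: eq_bigr => i _; apply: eq_bigr => v _.
  by rewrite /coefD split_l mulr1.
change (unsplit (inr i)) with (rshift q i).
rewrite share_r mxE.
under [X in _ = _ - X]eq_bigr => x _ do rewrite mxE big_distrl.
rewrite exchange_big /=.
rewrite [X in _ = _ - X]exchange_big /=.
under [X in _ = _ - X]eq_bigr => i' _ do
  (under eq_bigr => x _ do rewrite big_distrl; rewrite exchange_big /=).
rewrite -(sum_delta (fun i' => \sum_v y i' v) i) -sumrB.
rewrite [LHS]exchange_big /=. apply: eq_bigr => i' _; rewrite big_distrl -sumrB; apply: eq_bigr => v _.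
rewrite inner_sum.
rewrite inE /membP split_r /coefD split_r /=.
case hv: (v < k0.-1)%N => /=.
  case: (eqVneq i' i) => [->|ne].
    by rewrite (own_in HS hv) /= !mul0r mulr1 mul1r subrr.
  rewrite /= mulr0 sub0r.
  by case: (own S d i' v \in Aset S i); rewrite ?mul1r ?mul0r ?oppr0 ?mulN1r.
by rewrite eq_sym mulr1 mulrC mul0r subr0.
Qed.

Theorem mainTheorem14 (F : finFieldType) (k0 q : nat)
  (Hk0 : (0 < k0)%N) (Hk0q : (k0 < q)%N)
  (S : {set {set 'I_q}})
  (HS : forall A, A \in S -> #|A| = k0.-1)
  (Hint : forall S1 S2, S1 \in S -> S2 \in S -> S1 != S2 -> (#|S1 :&: S2| <= 1)%N) :
  exists B : BBT F k0.-1 (q + #|S|) k0 #|S|,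
    bbt_rate B = (1 - (q%:R / (q + #|S|)%:R))%R /\
    (forall j : 'I_(q + #|S|), (bbt_c B j <= #|S|)%N).
Proof.
have q0 : (0 < q)%N by apply: ltn_trans Hk0q.
pose d : 'I_q := Ordinal q0.
have Hpriv : forall (T : {set 'I_(q + #|S|)}), (#|T| <= k0.-1)%N ->
    forall i : 'I_#|S|,
    (#|\bigcup_(j in T) [set v : 'I_k0 | j \in psiD S d i v]| <= k0.-1)%N.
  move=> T hT i; apply: leq_trans (card_bigcup_le _ _ _ _) _.
  apply: leq_trans hT; rewrite -[#|T|]sum1_card; apply: leq_sum => j _.
  exact: card_psi_le1.
exists (@MkBBT F (k0.-1) (q + #|S|) k0 #|S| (LD F S) (psiD S d) (phiD S d)
  (LD_full F S) (@LD_correct F k0 q S d HS) Hpriv).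
split; last by move=> j; exact: (@Yidx_le k0 q S d HS Hint j).
rewrite /bbt_rate /info_rate /= sum1_card card_ord.
have h : ((q + #|S|)%:R : rat) != 0 by rewrite pnatr_eq0 -lt0n addn_gt0 q0.
move: h; rewrite natrD => h.
by field.
Qed.
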